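(* Let $(S,+)$ be a commutative semigroup, let $A\subseteq S$ be a $\mathcal{CR}$-set in $(S,+)$, and let $l\in\mathbb{N}$. Then the set $$\{(a,b)\in S\times S:\ \{a,a+b,a+2b,\ldots,a+lb\}\subseteq A\}$$ is a $\mathcal{CR}$-set in the semigroup $(S\times S,+)$ (with coordinatewise addition).
   Context: For a commutative semigroup $(S,+)$ and $r,n\in\mathbb{N}$, let $S^{r\times n}$ denote the set of $r\times n$ matrices with entries in $S$. For $M=(M_{ij})\in S^{r\times n}$ and a non-empty $\alpha\subseteq\{1,\ldots,r\}$, write $M_{\alpha j}=\sum_{i\in\alpha}M_{ij}$. A subset $A\subseteq S$ is a $\mathcal{CR}$-set (combinatorially rich set) if for every $n\in\mathbb{N}$ there exists $r\in\mathbb{N}$ such that for every $M\in S^{r\times n}$ there exist a non-empty set $\alpha\subseteq\{1,\ldots,r\}$ and $s\in S$ with $s+M_{\alpha j}\in A$ for all $j\in\{1,\ldots,n\}$. For $k\in\mathbb{N}$ and $b\in S$, $kb$ denotes $b+\cdots+b$ ($k$ times). *)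

(* Defs.v *)
From mathcomp Require Import all_boot.
Set Implicit Arguments. Unset Strict Implicit. Unset Printing Implicit Defensive.

Definition associative_op (S : Type) (op : S -> S -> S) :=
  forall x y z, op x (op y z) = op (op x y) z.
Definition commutative_op (S : Type) (op : S -> S -> S) :=
  forall x y, op x y = op y x.

(* M_{alpha j} = sum_{i in alpha} M i j, defined for nonempty alpha
   (None only when alpha is empty). *)
Definition col_subsum (S : Type) (op : S -> S -> S) (r n : nat)
  (M : 'I_r -> 'I_n -> S) (alpha : {set 'I_r}) (j : 'I_n) : option S :=
  foldr (fun i acc => Some (match acc with
                            | None => M i j
                            | Some v => op (M i j) v end))
        None (enum alpha).

(* CR-sets (combinatorially rich sets); N = {1,2,...}. *)
Definition CR_set (S : Type) (op : S -> S -> S) (A : S -> Prop) : Prop :=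
  forall n : nat, 0 < n ->
  exists r : nat, 0 < r /\
  forall M : 'I_r -> 'I_n -> S,
  exists alpha : {set 'I_r}, alpha != set0 /\
  exists s : S, forall j : 'I_n,
    match col_subsum op M alpha j with
    | Some v => A (op s v)
    | None => False
    end.

(* k b = b + ... + b (k times), for k >= 1 *)
Definition nmul (S : Type) (op : S -> S -> S) (k : nat) (b : S) : S :=
  iter k.-1 (op b) b.

Definition prod_op (S : Type) (op : S -> S -> S) (x y : S * S) : S * S :=
  (op x.1 y.1, op x.2 y.2).

Definition AP_pairs (S : Type) (op : S -> S -> S) (A : S -> Prop) (l : nat)
  (p : S * S) : Prop :=
  A p.1 /\ forall k : nat, 1 <= k <= l -> A (op p.1 (nmul op k p.2)).

(* Main.v *)
Require Import Defs.
From mathcomp Require Import all_boot.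
Set Implicit Arguments. Unset Strict Implicit. Unset Printing Implicit Defensive.

Definition lsum (T I : Type) (op : T -> T -> T) (f : I -> T) (s : seq I) : option T :=
  foldr (fun i acc => Some (match acc with None => f i | Some v => op (f i) v end)) None s.

Lemma lsum_cons (T I : Type) (op : T -> T -> T) (f : I -> T) x s :
  lsum op f (x :: s) = Some (match lsum op f s with None => f x | Some v => op (f x) v end).
Proof. by []. Qed.

Lemma lsum_nil (T I : Type) (op : T -> T -> T) (f : I -> T) s :
  lsum op f s = None -> s = [::].
Proof. by case: s. Qed.

Lemma lsum_ext (T I : Type) (op : T -> T -> T) (f g : I -> T) s :
  (forall i, f i = g i) -> lsum op f s = lsum op g s.
Proof. move=> fg; elim: s => [|x s IH] //; by rewrite !lsum_cons IH fg. Qed.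

Lemma lsum_some (T I : Type) (op : T -> T -> T) (f : I -> T) s :
  s <> [::] -> exists v, lsum op f s = Some v.
Proof. case: s => // x s _; rewrite lsum_cons; by eexists. Qed.

Lemma lsum2 (X Y Z I : Type) (opX : X -> X -> X) (opY : Y -> Y -> Y) (opZ : Z -> Z -> Z)
  (h : X -> Y -> Z) (hlaw : forall x x' y y', h (opX x x') (opY y y') = opZ (h x y) (h x' y'))
  (F : I -> X) (G : I -> Y) s a b :
  lsum opX F s = Some a -> lsum opY G s = Some b ->
  lsum opZ (fun i => h (F i) (G i)) s = Some (h a b).
Proof.
elim: s a b => [|x t IH] a b //.
rewrite !lsum_cons.
case E1: (lsum opX F t) => [a'|]; case E2: (lsum opY G t) => [b'|].
- move=> [<-] [<-]; by rewrite (IH _ _ E1 E2) hlaw.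
- by move: (lsum_nil E2) E1 => ->.
- by move: (lsum_nil E1) E2 => ->.
- move: (lsum_nil E1) => ->; by move=> [<-] [<-].
Qed.

Section Main.
Variables (S : Type) (op : S -> S -> S)
  (opA : associative_op op) (opC : commutative_op op).

Lemma swap a b c d : op (op a b) (op c d) = op (op a c) (op b d).
Proof.
by rewrite -!opA (opA b c d) (opC b c) -(opA c b d).
Qed.

Lemma nmulM k x y : nmul op k (op x y) = op (nmul op k x) (nmul op k y).
Proof.
rewrite /nmul; case: k => [|k] //=.
elim: k => [|k IH] //=. by rewrite IH swap.
Qed.

End Main.

Theorem theorem8 (S : Type) (op : S -> S -> S)
  (opA : associative_op op) (opC : commutative_op op)
  (A : S -> Prop) (hA : CR_set op A) (l : nat) (hl : 0 < l) :
  CR_set (prod_op op) (AP_pairs op A l).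
Proof.
move=> n hn.
set T := ('I_n * 'I_l.+1)%type.
have hT : 0 < #|{: T}|.
  exact: (leq_ltn_trans (leq0n _) (ltn_ord (enum_rank ((Ordinal hn, ord0) : T)))).
have [r [hr H]] := hA _ hT.
exists r; split => // M.
pose c := (M (Ordinal hr) (Ordinal hn)).2.
pose N := fun (i : 'I_r) (col : 'I_#|{: T}|) =>
  let: (j, k) := enum_val col in
  if (k : nat) is 0 then (M i j).1 else op (M i j).1 (nmul op k (op (M i j).2 c)).
have [alpha [anz [s Hs]]] := H N.
exists alpha; split => //.
have ne : enum alpha <> [::].
  have [x xa] := set0Pn _ anz.
  by move=> E; move: xa; rewrite -mem_enum E.
have [sc Hsc] := lsum_some op (fun _ : 'I_r => c) ne.
exists (s, sc) => j.
have [a Ha] := lsum_some op (fun i => (M i j).1) ne.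
have [b Hb] := lsum_some op (fun i => (M i j).2) ne.
have Hab : col_subsum (prod_op op) M alpha j = Some (a, b).
  rewrite /col_subsum -/(lsum (prod_op op) (fun i => M i j) (enum alpha)).
  rewrite (lsum_ext _ _ (g := fun i => pair (M i j).1 (M i j).2)); last by move=> i; case: (M i j).
  exact: (lsum2 (h := pair) _ Ha Hb).
rewrite Hab /prod_op /=.
split.
  have := Hs (enum_rank ((j, ord0) : T)).
  rewrite /col_subsum -/(lsum op (fun i => N i (enum_rank ((j, ord0) : T))) (enum alpha)).
  rewrite (lsum_ext _ _ (g := fun i => (M i j).1)); last by move=> i; rewrite /N enum_rankK.
  by rewrite Ha.
move=> k /andP [k1 kl].
have kl' : k < l.+1 by [].
have := Hs (enum_rank ((j, Ordinal kl') : T)).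
rewrite /col_subsum -/(lsum op (fun i => N i (enum_rank ((j, Ordinal kl') : T))) (enum alpha)).
rewrite (lsum_ext _ _ (g := fun i => op (M i j).1 (nmul op k (op (M i j).2 c)))); last first.
  by move=> i; rewrite /N enum_rankK /=; case: k k1 kl kl'.
have Hbc : lsum op (fun i => op (M i j).2 c) (enum alpha) = Some (op b sc).
  exact: (lsum2 (h := op) (swap opA opC) Hb Hsc).
have Hk : lsum op (fun i => nmul op k (op (M i j).2 c)) (enum alpha) = Some (nmul op k (op b sc)).
  exact: (lsum2 (h := fun x (_ : S) => nmul op k x) (fun x x' y y' => nmulM opA opC k x x') Hbc Hbc).
rewrite (lsum2 (h := op) (swap opA opC) Ha Hk).
by rewrite (opC b sc) opA.
Qed.
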